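(* Let $\mathbf a=(a_1,\ldots,a_n)\in\mathbb Z_{\geq1}^n$ and $\mathbf b=(b_1,\ldots,b_m)\in\mathbb Z_{\geq1}^m$ with $\gcd(a_i,b_j)=1$ for all $1\leq i\leq n$ and $1\leq j\leq m$. Then the generators $\mathbf g_{i,j}$ are all minimal solutions, and the set of extreme points of $\mathrm{conv}(\mathcal H(\mathbf a,\mathbf b))$ is $\{\mathbf 0\}\cup\{\mathbf g_{i,j}:1\leq i\leq n,\ 1\leq j\leq m\}$.
   Context: A solution is a pair $(\mathbf x,\mathbf y)\in\mathbb Z_{\geq0}^n\times\mathbb Z_{\geq0}^m$ with $\sum_i x_ia_i=\sum_j y_jb_j$; it is minimal if it is nonzero and cannot be written as the sum of two nonzero solutions. $\mathcal H(\mathbf a,\mathbf b)$ is the set of minimal solutions (the Hilbert basis of the cone $\{(\mathbf x,\mathbf y)\in\mathbb R_{\geq0}^{n+m}:\mathbf a\cdot\mathbf x=\mathbf b\cdot\mathbf y\}$, which by convention here also contains $\mathbf 0$ when taking its convex hull). With $\mathbf e_k$ the $k$th standard unit vector of $\mathbb R^{n+m}$, the generator $\mathbf g_{i,j}=b_j\mathbf e_i+a_i\mathbf e_{n+j}$ is the solution with only nonzero coordinates $x_i=b_j$, $y_j=a_i$. *)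

(* Defs.v *)
From HB Require Import structures.
From mathcomp Require Import all_boot all_order all_algebra.
Set Implicit Arguments. Unset Strict Implicit. Unset Printing Implicit Defensive.
Import Order.TTheory GRing.Theory Num.Theory.

Section Defs.
Variables (n m : nat) (a : 'I_n -> nat) (b : 'I_m -> nat).

Definition is_solution (x : {ffun 'I_n -> nat}) (y : {ffun 'I_m -> nat}) : Prop :=
  (\sum_(i < n) x i * a i = \sum_(j < m) y j * b j)%N.

Definition nonzero_sol (x : {ffun 'I_n -> nat}) (y : {ffun 'I_m -> nat}) : Prop :=
  x != [ffun=> 0%N] \/ y != [ffun=> 0%N].

Definition minimal_solution (x : {ffun 'I_n -> nat}) (y : {ffun 'I_m -> nat}) : Prop :=
  [/\ is_solution x y, nonzero_sol x y &
   ~ (exists x1 y1 x2 y2,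
       [/\ is_solution x1 y1 /\ nonzero_sol x1 y1,
           is_solution x2 y2 /\ nonzero_sol x2 y2,
           x = [ffun i => (x1 i + x2 i)%N] & y = [ffun j => (y1 j + y2 j)%N]])].

Definition gen_x (i : 'I_n) (j : 'I_m) : {ffun 'I_n -> nat} :=
  [ffun k => if k == i then b j else 0%N].
Definition gen_y (i : 'I_n) (j : 'I_m) : {ffun 'I_m -> nat} :=
  [ffun l => if l == j then a i else 0%N].

Variable R : realFieldType.
Local Open Scope ring_scope.

Definition embed (x : {ffun 'I_n -> nat}) (y : {ffun 'I_m -> nat}) : 'rV[R]_(n + m) :=
  row_mx (\row_(i < n) (x i)%:R) (\row_(j < m) (y j)%:R).

(* H(a,b) together with 0, as a subset of R^{n+m} *)
Definition Hset (p : 'rV[R]_(n + m)) : Prop :=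
  p = 0 \/ exists x y, minimal_solution x y /\ p = embed x y.
End Defs.

Section Convex.
Variables (R : realFieldType) (N : nat).
Local Open Scope ring_scope.

Definition conv (S : 'rV[R]_N -> Prop) (p : 'rV[R]_N) : Prop :=
  exists (k : nat) (lam : 'I_k -> R) (q : 'I_k -> 'rV[R]_N),
    [/\ forall l, 0 <= lam l, \sum_(l < k) lam l = 1,
        forall l, S (q l) & p = \sum_(l < k) lam l *: q l].

Definition extreme_point (C : 'rV[R]_N -> Prop) (p : 'rV[R]_N) : Prop :=
  C p /\ forall u v (t : R), C u -> C v -> 0 < t < 1 ->
    p = t *: u + (1 - t) *: v -> u = v.
End Convex.

(* Main.v *)
Require Import Defs.
From HB Require Import structures.
From mathcomp Require Import all_boot all_order all_algebra.
From mathcomp Require Import zify ring lra.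
Set Implicit Arguments. Unset Strict Implicit. Unset Printing Implicit Defensive.
Import Order.TTheory GRing.Theory Num.Theory.

Definition wsum (I : Type) (w : I -> nat) (s : seq I) := (\sum_(k <- s) w k)%N.
Definition cnt (n : nat) (s : seq 'I_n) : {ffun 'I_n -> nat} := [ffun i => count_mem i s].

Lemma cnt_wsum n (w : 'I_n -> nat) s : (\sum_i cnt s i * w i)%N = wsum w s.
Proof.
elim: s => [|h s IH].
  by rewrite /wsum big_nil; apply: big1 => i _; rewrite ffunE.
rewrite /wsum big_cons -/(wsum w s) -IH.
transitivity (\sum_i ((i == h) * w i + cnt s i * w i))%N.
  by apply: eq_bigr => i _; rewrite !ffunE /= mulnDl eq_sym.
rewrite big_split /= (bigD1 h) //= eqxx mul1n big1 ?addn0 // => i /negbTE ->.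
by rewrite mul0n.
Qed.

Lemma wsum_cat (I : Type) (w : I -> nat) s1 s2 : wsum w (s1 ++ s2) = wsum w s1 + wsum w s2.
Proof. by rewrite /wsum big_cat. Qed.

Lemma wsum_pos (I : eqType) (w : I -> nat) s : (forall i, 0 < w i) -> s != [::] -> 0 < wsum w s.
Proof. case: s => // h t Hw _; rewrite /wsum big_cons; exact: ltn_addr. Qed.

Lemma cnt_nonzero n (s : seq 'I_n) : s != [::] -> cnt s != [ffun=> 0%N].
Proof. case: s => // h t _; apply/eqP => /ffunP /(_ h); rewrite !ffunE /= eqxx. by []. Qed.

Lemma not_min_split n m (a : 'I_n -> nat) (b : 'I_m -> nat) (x : {ffun 'I_n -> nat}) (y : {ffun 'I_m -> nat})
  (A1 A2 : seq 'I_n) (B1 B2 : seq 'I_m) :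
  (forall t, x t = count_mem t A1 + count_mem t A2) ->
  (forall t, y t = count_mem t B1 + count_mem t B2) ->
  wsum a A1 = wsum b B1 -> wsum a A2 = wsum b B2 ->
  (A1 != [::]) || (B1 != [::]) -> (A2 != [::]) || (B2 != [::]) ->
  ~ minimal_solution a b x y.
Proof.
move=> Hx Hy E1 E2 N1 N2 [_ _]; apply.
exists (cnt A1), (cnt B1), (cnt A2), (cnt B2); split.
- split; first by rewrite /is_solution !cnt_wsum.
  by case/orP: N1 => [/cnt_nonzero|/cnt_nonzero]; [left|right].
- split; first by rewrite /is_solution !cnt_wsum.
  by case/orP: N2 => [/cnt_nonzero|/cnt_nonzero]; [left|right].
- by apply/ffunP => t; rewrite !ffunE Hx.
- by apply/ffunP => t; rewrite !ffunE Hy.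
Qed.

Definition seqOf n (x : {ffun 'I_n -> nat}) := flatten [seq nseq (x i) i | i <- enum 'I_n].

Lemma count_seqOf n (x : {ffun 'I_n -> nat}) t : count_mem t (seqOf x) = x t.
Proof.
rewrite /seqOf count_flatten sumnE big_map big_map big_enum /=.
rewrite (bigD1 t) //= count_nseq /= eqxx mul1n big1 ?addn0 // => i /negbTE Hi.
by rewrite count_nseq /= Hi.
Qed.

Lemma pre_split (I : Type) (w : I -> nat) s k i : k <= i ->
  wsum w (take i s) = wsum w (take k s) + wsum w (drop k (take i s)).
Proof. by move=> ki; rewrite -{1}(cat_take_drop k (take i s)) take_takel // wsum_cat. Qed.

Lemma decomp (I : Type) (s : seq I) k i : k <= i ->
  s = take k s ++ drop k (take i s) ++ drop i s.
Proof.
by move=> ki; rewrite catA -(take_takel s ki) !cat_take_drop.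
Qed.

Lemma blk_nil (I : eqType) (s : seq I) k i : k < i -> i <= size s -> drop k (take i s) != [::].
Proof. by move=> ki ip; rewrite -size_eq0 size_drop size_takel //; lia. Qed.

Lemma drop_nil (I : eqType) (s : seq I) i : i < size s -> drop i s != [::].
Proof. by move=> ip; rewrite -size_eq0 size_drop; lia. Qed.

Lemma pre_lt (I : eqType) (w : I -> nat) s i : (forall t, 0 < w t) -> i < size s ->
  wsum w (take i s) < wsum w s.
Proof.
move=> Hw ip; rewrite -{2}(cat_take_drop i s) wsum_cat.
have := wsum_pos Hw (drop_nil ip); lia.
Qed.

Lemma KL n m (a : 'I_n -> nat) (b : 'I_m -> nat) (x : {ffun 'I_n -> nat}) (y : {ffun 'I_m -> nat}) :
  (forall i, 0 < a i) -> (forall j, 0 < b j) -> minimal_solution a b x y ->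
  (\sum_i x i) * (\sum_j y j) <= \sum_i x i * a i.
Proof.
move=> Ha Hb Hmin.
have Hsol : is_solution a b x y by case: Hmin.
set S := \sum_i x i * a i.
pose sA := seqOf x; pose sB := seqOf y.
have hx t : x t = count_mem t sA by rewrite count_seqOf.
have hy t : y t = count_mem t sB by rewrite count_seqOf.
have szA : size sA = \sum_i x i.
  rewrite -sum1_size -/(wsum (fun _ => 1) sA) -cnt_wsum.
  by apply: eq_bigr => i _; rewrite ffunE muln1 hx.
have szB : size sB = \sum_j y j.
  rewrite -sum1_size -/(wsum (fun _ => 1) sB) -cnt_wsum.
  by apply: eq_bigr => i _; rewrite ffunE muln1 hy.
have SA : wsum a sA = S.
  rewrite -cnt_wsum /S; apply: eq_bigr => i _; by rewrite ffunE hx.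
have SB : wsum b sB = S.
  rewrite -cnt_wsum /S Hsol; apply: eq_bigr => i _; by rewrite ffunE hy.
rewrite -szA -szB.
set p := size sA; set q := size sB.
pose al i := wsum a (take i sA); pose be j := wsum b (take j sB).
have alS i : i < p -> al i < S by move=> ip; rewrite -SA; exact: pre_lt.
have beS j : j < q -> be j < S by move=> jq; rewrite -SB; exact: pre_lt.
have core : forall i k j l, k <= i -> i < p -> j < q -> l < q ->
   [\/ al i + be l = al k + be j, al i + be l = al k + be j + S |
       al i + be l + S = al k + be j] -> i = k /\ j = l.
  move=> i k j l ki ip jq lq rel.
  have EA := pre_split a sA ki; rewrite -/(al i) -/(al k) in EA.
  set dA := wsum a _ in EA.
  have WA : S = al k + dA + wsum a (drop i sA).
    by rewrite -SA {1}(decomp sA ki) !wsum_cat addnA.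
  have hxA t : x t = count_mem t (drop k (take i sA)) + count_mem t (take k sA ++ drop i sA).
    rewrite hx {1}(decomp sA ki) !count_cat; lia.
  have nA2 : take k sA ++ drop i sA != [::].
    by rewrite -size_eq0 size_cat size_drop; lia.
  case: (leqP l j) => [lj|jl].
  - have EB := pre_split b sB lj; rewrite -/(be j) -/(be l) in EB.
    set eB := wsum b _ in EB.
    have WB : S = be l + eB + wsum b (drop j sB).
      by rewrite -SB {1}(decomp sB lj) !wsum_cat addnA.
    have hyB t : y t = count_mem t (drop l (take j sB)) + count_mem t (take l sB ++ drop j sB).
      rewrite hy {1}(decomp sB lj) !count_cat; lia.
    have := alS _ ip; have := beS _ jq => bS aS.
    have de : dA = eB by case: rel; lia.
    case: (ltnP k i) => [ki'|ik].
      exfalso; apply: (not_min_split hxA hyB _ _ _ _ Hmin).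
      + exact: de.
      + rewrite !wsum_cat -/(al k) -/(be l); lia.
      + by rewrite (blk_nil (s:=sA) ki' (ltnW ip)).
      + by rewrite nA2.
    have ik' : i = k by lia.
    split => //.
    case: (ltnP l j) => [lj'|jl']; last by lia.
    move: EA; rewrite ik' => EA; have := wsum_pos Hb (blk_nil (s:=sB) lj' (ltnW jq)); rewrite -/eB; lia.
  - have EB := pre_split b sB (ltnW jl); rewrite -/(be j) -/(be l) in EB.
    set eB := wsum b _ in EB.
    have WB : S = be j + eB + wsum b (drop l sB).
      by rewrite -SB {1}(decomp sB (ltnW jl)) !wsum_cat addnA.
    have hyB t : y t = count_mem t (take j sB ++ drop l sB) + count_mem t (drop j (take l sB)).
      rewrite hy {1}(decomp sB (ltnW jl)) !count_cat; lia.
    have := alS _ ip; have := beS _ lq => bS aS.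
    have epos := wsum_pos Hb (blk_nil jl (ltnW lq)); rewrite -/eB in epos.
    have de : dA + eB = S by case: rel; lia.
    case: (ltnP k i) => [ki'|ik]; last first.
      have ik' : i = k by lia.
      by move: EA; rewrite ik'; lia.
    exfalso; apply: (not_min_split hxA hyB _ _ _ _ Hmin).
    + rewrite !wsum_cat -/(be j) -/dA; lia.
    + rewrite !wsum_cat -/(al k) -/eB; lia.
    + by rewrite (blk_nil (s:=sA) ki' (ltnW ip)).
    + by rewrite orbC (blk_nil (s:=sB) jl (ltnW lq)).
pose f (ij : 'I_p * 'I_q) : nat :=
  if be ij.2 <= al ij.1 then al ij.1 - be ij.2 else al ij.1 + S - be ij.2.
have fS ij : f ij < S.
  have := alS _ (ltn_ord ij.1); have := beS _ (ltn_ord ij.2).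
  move=> h1 h2; rewrite /f; case: (leqP (be ij.2) (al ij.1)) => H; lia.
pose g ij := Ordinal (fS ij).
have ginj : injective g.
  move=> [i j] [k l] /(congr1 val) /=; rewrite /f /=.
  have := alS _ (ltn_ord i); have := beS _ (ltn_ord j).
  have := alS _ (ltn_ord k); have := beS _ (ltn_ord l).
  move=> h1 h2 h3 h4 Hf.
  have rel : [\/ al i + be l = al k + be j, al i + be l = al k + be j + S |
       al i + be l + S = al k + be j].
    move: Hf; case: ifP => ?; case: ifP => ? Hf.
    - constructor 1; lia.
    - constructor 2; lia.
    - constructor 3; lia.
    - constructor 1; lia.
  case: (leqP k i) => ki.
    have [E1 E2] := core _ _ _ _ ki (ltn_ord i) (ltn_ord j) (ltn_ord l) rel.
    by congr pair; apply: val_inj.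
  have rel' : [\/ al k + be j = al i + be l, al k + be j = al i + be l + S |
       al k + be j + S = al i + be l] by case: rel => H; [constructor 1|constructor 3|constructor 2]; lia.
  have [E1 E2] := core _ _ _ _ (ltnW ki) (ltn_ord k) (ltn_ord l) (ltn_ord j) rel'.
  by congr pair; apply: val_inj.
have := leq_card g ginj; rewrite card_prod !card_ord; exact.
Qed.

Lemma sum_single n (f w : 'I_n -> nat) i : (forall k, k != i -> f k = 0) ->
  \sum_k f k * w k = f i * w i.
Proof.
move=> H; rewrite (bigD1 i) //= big1 ?addn0 // => k Hk; by rewrite H.
Qed.

Lemma zero_sol n m (x : {ffun 'I_n -> nat}) (y : {ffun 'I_m -> nat}) :
  (forall k, x k = 0) -> (forall l, y l = 0) -> ~ nonzero_sol x y.
Proof.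
move=> Hx Hy [] /eqP; apply; apply/ffunP => k; by rewrite ffunE ?Hx ?Hy.
Qed.

Lemma gen_min n m (a : 'I_n -> nat) (b : 'I_m -> nat)
  (a_pos : forall i, (0 < a i)%N) (b_pos : forall j, (0 < b j)%N)
  (cop : forall i j, coprime (a i) (b j)) i j :
  minimal_solution a b (gen_x b i j) (gen_y a i j).
Proof.
have hb := b_pos j; have ha := a_pos i.
split.
- rewrite /is_solution (@sum_single _ _ _ i); last by move=> k Hk; rewrite ffunE (negbTE Hk).
  rewrite (@sum_single _ _ _ j); last by move=> k Hk; rewrite ffunE (negbTE Hk).
  by rewrite !ffunE !eqxx mulnC.
- left; apply/eqP => /ffunP /(_ i); rewrite !ffunE eqxx; lia.
case=> x1 [y1 [x2 [y2 [[S1 N1] [S2 N2] Ex Ey]]]].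
have ex k : gen_x b i j k = x1 k + x2 k by rewrite Ex ffunE.
have ey l : gen_y a i j l = y1 l + y2 l by rewrite Ey ffunE.
have x1z k : k != i -> x1 k = 0 by move=> Hk; have := ex k; rewrite ffunE (negbTE Hk); lia.
have x2z k : k != i -> x2 k = 0 by move=> Hk; have := ex k; rewrite ffunE (negbTE Hk); lia.
have y1z k : k != j -> y1 k = 0 by move=> Hk; have := ey k; rewrite ffunE (negbTE Hk); lia.
have y2z k : k != j -> y2 k = 0 by move=> Hk; have := ey k; rewrite ffunE (negbTE Hk); lia.
have xi := ex i; rewrite ffunE eqxx in xi.
move: S1 S2; rewrite /is_solution (sum_single _ x1z) (sum_single _ y1z).
rewrite (sum_single _ x2z) (sum_single _ y2z) => S1 S2.
have : b j %| x1 i.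
  rewrite -(@Gauss_dvdl _ _ (a i)); last by rewrite coprime_sym.
  by rewrite S1 dvdn_mull.
case/dvdnP => c Hc.
case: c Hc => [|c] Hc.
  apply: (zero_sol (x:=x1) (y:=y1) _ _ N1) => k.
    by case: (eqVneq k i) => [->|/x1z]; [rewrite Hc|].
  case: (eqVneq k j) => [->|/y1z] //.
  by move: S1; rewrite Hc mul0n => /esym/eqP; rewrite muln_eq0 (negbTE (lt0n_neq0 hb)) orbF => /eqP.
have x2i : x2 i = 0 by move: xi; rewrite Hc; nia.
apply: (zero_sol (x:=x2) (y:=y2) _ _ N2) => k.
  by case: (eqVneq k i) => [->|/x2z].
case: (eqVneq k j) => [->|/y2z] //.
by move: S2; rewrite x2i mul0n => /esym/eqP; rewrite muln_eq0 (negbTE (lt0n_neq0 hb)) orbF => /eqP.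
Qed.
Local Open Scope ring_scope.

Definition phi (R : realFieldType) N (w u : 'rV[R]_N) : R := \sum_k u 0 k * w 0 k.

Lemma phiD (R : realFieldType) N (w : 'rV[R]_N) : {morph phi w : u v / u + v >-> u + v}.
Proof. by move=> u v; rewrite /phi -big_split; apply: eq_bigr => k _; rewrite mxE mulrDl. Qed.

Lemma phi0 (R : realFieldType) N (w : 'rV[R]_N) : phi w 0 = 0.
Proof. by rewrite /phi big1 // => k _; rewrite mxE mul0r. Qed.

Lemma phiZ (R : realFieldType) N (w : 'rV[R]_N) t u : phi w (t *: u) = t * phi w u.
Proof. by rewrite /phi mulr_sumr; apply: eq_bigr => k _; rewrite mxE mulrA. Qed.

Lemma phi_sum (R : realFieldType) N (w : 'rV[R]_N) (I : finType) (lam : I -> R) q :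
  phi w (\sum_i lam i *: q i) = \sum_i lam i * phi w (q i).
Proof.
rewrite (big_morph (phi w) (phiD w) (phi0 w)); apply: eq_bigr => i _; exact: phiZ.
Qed.

Lemma conv_fin (R : realFieldType) N (S : 'rV[R]_N -> Prop) (I : finType) (lam : I -> R) q :
  (forall i, 0 <= lam i) -> \sum_i lam i = 1 -> (forall i, S (q i)) ->
  conv S (\sum_i lam i *: q i).
Proof.
move=> H0 H1 HS; exists #|I|, (fun l => lam (enum_val l)), (fun l => q (enum_val l)).
split => //.
- by rewrite -H1 -(big_enum_val lam); apply: eq_bigl => i; rewrite inE.
- by rewrite -(big_enum_val (fun i => lam i *: q i)); apply: eq_bigl => i; rewrite inE.
Qed.

Lemma conv_pt (R : realFieldType) N (S : 'rV[R]_N -> Prop) p : S p -> conv S p.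
Proof.
move=> Sp; exists 1%N, (fun _ => 1), (fun _ => p); split => //.
- by rewrite big_ord1.
- by rewrite big_ord1 scale1r.
Qed.

Lemma extreme_in (R : realFieldType) N (S : 'rV[R]_N -> Prop) (I : finType) (lam : I -> R) q p :
  extreme_point (conv S) p ->
  (forall i, 0 <= lam i) -> \sum_i lam i = 1 -> (forall i, S (q i)) ->
  p = \sum_i lam i *: q i -> exists i, p = q i.
Proof.
move=> [_ Hext] H0 H1 HS Hp.
case: (pickP (fun i => 0 < lam i)) => [i0 Hi0|H]; last first.
  exfalso; have : \sum_i lam i = 0.
    apply: big1 => i _; apply/eqP; rewrite eq_le H0 andbT.
    by have := H i; rewrite /= ltNge => /negbFE.
  by rewrite H1 => /eqP; rewrite oner_eq0.
exists i0.
have Hs := H1; rewrite (bigD1 i0) //= in Hs.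
have rest0 : 0 <= \sum_(i | i != i0) lam i by apply: sumr_ge0 => i _.
set t := lam i0 in Hi0 Hs.
have Hsp : p = t *: q i0 + \sum_(i | i != i0) lam i *: q i by rewrite Hp (bigD1 i0).
case: (eqVneq t 1) => Ht1.
  have z : forall i, i != i0 -> lam i = 0.
    apply: psumr_eq0P; first by move=> i _.
    by move: Hs; rewrite Ht1; lra.
  by rewrite Hsp Ht1 scale1r big1 ?addr0 // => i Hi; rewrite z // scale0r.
have t1 : t < 1 by rewrite lt_neqAle Ht1 /= -Hs lerDl.
have t1' : 1 - t != 0 by rewrite subr_eq0 eq_sym.
pose mu i := if i == i0 then 0 else lam i / (1 - t).
have Cr : conv S (\sum_i mu i *: q i).
  apply: conv_fin => //.
    by move=> i; rewrite /mu; case: eqP => // _; rewrite divr_ge0 // subr_ge0 ltW.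
  rewrite (bigD1 i0) //= /mu eqxx add0r.
  transitivity (\sum_(i | i != i0) lam i / (1 - t)).
    by apply: eq_bigr => i /negbTE ->.
  have E1 : 1 - t = \sum_(i | i != i0) lam i by rewrite -Hs addrC addrK.
  by rewrite -mulr_suml -E1 mulfV.
have E : p = t *: q i0 + (1 - t) *: \sum_i mu i *: q i.
  rewrite Hsp scaler_sumr [in RHS](bigD1 i0) //= /mu eqxx scale0r scaler0 add0r.
  congr (_ + _); apply: eq_bigr => i /negbTE ->.
  by rewrite scalerA mulrC divfK.
have := Hext _ _ _ (conv_pt (HS i0)) Cr _ E.
rewrite Hi0 t1 => /(_ isT) Eq.
by rewrite E -Eq -scalerDl addrC subrK scale1r.
Qed.

Lemma face_ext (R : realFieldType) N (S : 'rV[R]_N -> Prop) (w : 'rV[R]_N) (c : R) p0 :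
  S p0 -> phi w p0 = c ->
  (forall s, S s -> phi w s <= c /\ (phi w s = c -> s = p0)) ->
  extreme_point (conv S) p0.
Proof.
move=> Sp0 Pc HS.
have HC : forall u, conv S u -> phi w u <= c /\ (phi w u = c -> u = p0).
  move=> u [k [lam [q [H0 H1 HSq ->]]]]; rewrite phi_sum.
  have le l : lam l * phi w (q l) <= lam l * c.
    by rewrite ler_wpM2l // (HS _ (HSq l)).1.
  split.
    by apply: le_trans (ler_sum _ (fun l _ => le l)) _; rewrite -mulr_suml H1 mul1r.
  move=> Heq.
  have Z : \sum_l lam l * (c - phi w (q l)) = 0.
    rewrite (eq_bigr (fun l => lam l * c - lam l * phi w (q l))); last by move=> l _; rewrite mulrBr.
    by rewrite sumrB -mulr_suml H1 mul1r Heq subrr.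
  have nn l : 0 <= lam l * (c - phi w (q l)).
    by rewrite mulr_ge0 ?subr_ge0 ?(HS _ (HSq l)).1 ?H0.
  have Z' := psumr_eq0P (fun l _ => nn l) Z.
  transitivity (\sum_(l < k) lam l *: p0); last by rewrite -scaler_suml H1 scale1r.
  apply: eq_bigr => l _.
  case: (eqVneq (lam l) 0) => [->|nz]; first by rewrite !scale0r.
  move: (Z' l isT) => /eqP; rewrite mulf_eq0 (negbTE nz) /= subr_eq0 => /eqP Hc.
  by rewrite ((HS _ (HSq l)).2 (esym Hc)).
split; first exact: conv_pt.
move=> u v t Cu Cv /andP [t0 t1] Hp.
have [hu eu] := HC u Cu; have [hv ev] := HC v Cv.
have E : c = t * phi w u + (1 - t) * phi w v by rewrite -Pc Hp phiD !phiZ.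
have Eu : phi w u = c.
  apply/eqP; rewrite eq_le hu /= leNgt; apply/negP => lt; nra.
have Ev : phi w v = c.
  apply/eqP; rewrite eq_le hv /= leNgt; apply/negP => lt; nra.
by rewrite (eu Eu) (ev Ev).
Qed.

Lemma phi_embed (R : realFieldType) n m (wl : 'rV[R]_n) (wr : 'rV[R]_m) x y :
  phi (row_mx wl wr) (embed R x y) =
  \sum_k (x k)%:R * wl 0 k + \sum_l (y l)%:R * wr 0 l.
Proof.
rewrite /phi big_split_ord /embed; congr (_ + _); apply: eq_bigr => k _.
  by rewrite !row_mxEl !mxE.
by rewrite !row_mxEr !mxE.
Qed.

Lemma sum_gen (R : realFieldType) n (f : 'I_n -> R) i (c : nat) :
  \sum_k ([ffun k => if k == i then c else 0%N] k)%:R * f k = c%:R * f i.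
Proof.
rewrite (bigD1 i) //= ffunE eqxx big1 ?addr0 // => k /negbTE H.
by rewrite ffunE H mul0r.
Qed.

Lemma phi_gen (R : realFieldType) n m (a : 'I_n -> nat) (b : 'I_m -> nat)
  (wl : 'rV[R]_n) (wr : 'rV[R]_m) k l :
  phi (row_mx wl wr) (embed R (gen_x b k l) (gen_y a k l)) =
  (b l)%:R * wl 0 k + (a k)%:R * wr 0 l.
Proof. by rewrite phi_embed /gen_x /gen_y !sum_gen. Qed.

Lemma ffun_nz n (x : {ffun 'I_n -> nat}) : x != [ffun=> 0%N] -> exists k, x k != 0%N.
Proof.
move=> Hx; case: (pickP (fun k => x k != 0%N)) => [k Hk|H]; first by exists k.
case/eqP: Hx; apply/ffunP => k; rewrite ffunE; apply/eqP.
by move/negbFE: (H k).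
Qed.

Lemma sum_pos n (x : {ffun 'I_n -> nat}) (w : 'I_n -> nat) :
  (forall i, (0 < w i)%N) -> x != [ffun=> 0%N] -> (0 < \sum_i x i * w i)%N.
Proof.
move=> Hw /ffun_nz [k Hk]; rewrite (bigD1 k) //=; apply: ltn_addr.
by rewrite muln_gt0 lt0n Hk Hw.
Qed.

Lemma DL (R : realFieldType) n m (a : 'I_n -> nat) (b : 'I_m -> nat) x y :
  is_solution a b x y -> (0 < \sum_i x i * a i)%N ->
  embed R x y = \sum_(t : 'I_n * 'I_m)
     ((x t.1)%:R * (y t.2)%:R / (\sum_i x i * a i)%N%:R) *:
        embed R (gen_x b t.1 t.2) (gen_y a t.1 t.2).
Proof.
move=> Hs Sp; rewrite /is_solution in Hs; set S := (\sum_i x i * a i)%N.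
have SR : (S%:R : R) != 0 by rewrite pnatr_eq0 -lt0n.
rewrite -(pair_bigA _ (fun i j => ((x i)%:R * (y j)%:R / S%:R) *:
        embed R (gen_x b i j) (gen_y a i j))).
apply/rowP => c; rewrite !summxE.
case: (split_ordP c) => [k ->|l ->].
- rewrite {1}/embed row_mxEl mxE.
  under eq_bigr do rewrite summxE.
  under eq_bigr do under eq_bigr do rewrite mxE /embed row_mxEl mxE ffunE.
  rewrite (bigD1 k) //= [X in _ = _ + X]big1 ?addr0; last first.
    by move=> i Hi; apply: big1 => j _; rewrite eq_sym (negbTE Hi) mulr0.
  transitivity ((x k)%:R / S%:R * (\sum_j y j * b j)%N%:R : R).
    by rewrite -Hs -/S (divfK SR).
  rewrite natr_sum mulr_sumr; apply: eq_bigr => j _; rewrite eqxx natrM.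
  by ring.
- rewrite {1}/embed row_mxEr mxE.
  under eq_bigr do rewrite summxE.
  under eq_bigr do under eq_bigr do rewrite mxE /embed row_mxEr mxE ffunE.
  transitivity (\sum_i (x i)%:R * (y l)%:R / S%:R * (a i)%:R : R); last first.
    apply: eq_bigr => i _; rewrite (bigD1 l) //= eqxx big1 ?addr0 //.
    by move=> j Hj; rewrite eq_sym (negbTE Hj) mulr0.
  transitivity ((y l)%:R / S%:R * (\sum_i x i * a i)%N%:R : R); first by rewrite -/S (divfK SR).
  rewrite natr_sum mulr_sumr; apply: eq_bigr => i _; rewrite natrM.
  by ring.
Qed.

Lemma DS (R : realFieldType) n m (a : 'I_n -> nat) (b : 'I_m -> nat)
  (a_pos : forall i, (0 < a i)%N) (b_pos : forall j, (0 < b j)%N) (s : 'rV[R]_(n + m)) :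
  Hset a b s -> exists lam : 'I_n * 'I_m -> R,
   [/\ forall t, 0 <= lam t, \sum_t lam t <= 1 &
       s = \sum_t lam t *: embed R (gen_x b t.1 t.2) (gen_y a t.1 t.2)].
Proof.
case=> [->|[x [y [Hm ->]]]].
  exists (fun _ => 0); split => //; first by rewrite big1 // ler01.
  by rewrite big1 // => t _; rewrite scale0r.
have Hs : is_solution a b x y by case: Hm.
have Sp : (0 < \sum_i x i * a i)%N.
  case: Hm => _ [Hnz|Hnz] _; first exact: sum_pos.
  by rewrite Hs; apply: sum_pos.
set S := (\sum_i x i * a i)%N in Sp.
exists (fun t => (x t.1)%:R * (y t.2)%:R / S%:R); split.
- by move=> t; rewrite divr_ge0 ?mulr_ge0 ?ler0n.
- have -> : \sum_(t : 'I_n * 'I_m) (x t.1)%:R * (y t.2)%:R / S%:R =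
            \sum_i \sum_j ((x i)%:R * (y j)%:R / S%:R : R) by rewrite pair_bigA.
  have -> : \sum_i \sum_j ((x i)%:R * (y j)%:R / S%:R : R) =
            ((\sum_i x i) * (\sum_j y j))%N%:R / S%:R.
    rewrite natrM !natr_sum !mulr_suml; apply: eq_bigr => i _.
    by rewrite mulr_sumr mulr_suml.
  rewrite ler_pdivrMr ?ltr0n // mul1r ler_nat; exact: KL.
- exact: DL.
Qed.

Theorem corollary3 (R : realFieldType) (n m : nat) (a : 'I_n -> nat) (b : 'I_m -> nat)
  (a_pos : forall i, (0 < a i)%N) (b_pos : forall j, (0 < b j)%N)
  (cop : forall i j, coprime (a i) (b j)) :
  (forall i j, minimal_solution a b (gen_x b i j) (gen_y a i j)) /\
  (forall p : 'rV[R]_(n + m),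
     extreme_point (conv (Hset a b (R:=R))) p <->
     (p = 0 \/ exists i j, p = embed R (gen_x b i j) (gen_y a i j))).
Proof.
split; first by move=> i j; exact: gen_min.
have genH i j : Hset a b (R:=R) (embed R (gen_x b i j) (gen_y a i j)).
  by right; exists (gen_x b i j), (gen_y a i j); split => //; exact: gen_min.
move=> p; split.
- move=> Hext.
  have [Cp _] := Hext; case: Cp => k [lam [q [H0 H1 HS Hp]]].
  have [l El] := extreme_in Hext H0 H1 HS Hp.
  have Hp' : Hset a b p by rewrite El.
  have [lam' [L0 L1 Ls]] := DS a_pos b_pos Hp'.
  pose mu (o : ('I_1 + ('I_n * 'I_m))%type) :=
    match o with inl _ => 1 - \sum_t lam' t | inr t => lam' t end.
  pose Q (o : ('I_1 + ('I_n * 'I_m))%type) :=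
    match o with inl _ => 0 | inr t => embed R (gen_x b t.1 t.2) (gen_y a t.1 t.2) end.
  have M0 : forall o, 0 <= mu o by case => [_|t] /=; rewrite ?subr_ge0.
  have M1 : \sum_o mu o = 1 by rewrite big_sumType /= big_ord1 subrK.
  have MS : forall o, Hset a b (Q o) by case => [_|t] /=; [left | exact: genH].
  have MP : p = \sum_o mu o *: Q o by rewrite big_sumType /= big_ord1 scaler0 add0r.
  have [[o|t] ->] := extreme_in Hext M0 M1 MS MP; first by left.
  by right; exists t.1, t.2.
- case => [->|[i [j ->]]].
  + apply: (face_ext (w := row_mx (const_mx (-1)) (const_mx (-1))) (c := 0)).
    * by left.
    * exact: phi0.
    move=> s Hs; have [lam [L0 L1 ->]] := DS a_pos b_pos Hs.
    rewrite phi_sum.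
    have g t : phi (row_mx (const_mx (-1)) (const_mx (-1)))
        (embed R (gen_x b t.1 t.2) (gen_y a t.1 t.2)) = - ((b t.2)%:R + (a t.1)%:R).
      by rewrite phi_gen !mxE !mulrN1 opprD.
    under eq_bigr => t _ do rewrite g mulrN.
    have pos t : 0 < ((b t.2)%:R + (a t.1)%:R : R) by rewrite addr_gt0 // ltr0n.
    split.
      by apply: sumr_le0 => t _; rewrite oppr_le0 mulr_ge0 // ltW.
    move=> Z.
    have Z' : \sum_t lam t * ((b t.2)%:R + (a t.1)%:R) = 0.
      by apply/eqP; rewrite -oppr_eq0 -sumrN Z.
    have nn t : 0 <= lam t * ((b t.2)%:R + (a t.1)%:R) by rewrite mulr_ge0 // ltW.
    have Z'' := psumr_eq0P (fun t _ => nn t) Z'.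
    apply: big1 => t _.
    move: (Z'' t isT) => /eqP; rewrite mulf_eq0 (gt_eqF (pos t)) orbF => /eqP ->.
    by rewrite scale0r.
  + set w := row_mx (\row_(k < n) (if k == i then (a k)%:R else - (a k)%:R))
                    (\row_(l < m) (if l == j then (b l)%:R else - (b l)%:R)) : 'rV[R]_(n + m).
    set G := fun t : 'I_n * 'I_m => embed R (gen_x b t.1 t.2) (gen_y a t.1 t.2).
    set c := phi w (embed R (gen_x b i j) (gen_y a i j)).
    apply: (face_ext (w := w) (c := c)); [exact: genH | by [] | ].
    have cpos : 0 < c.
      by rewrite /c phi_gen !mxE !eqxx addr_gt0 // mulr_gt0 // ltr0n.
    have gle t : t != (i, j) -> phi w (G t) <= 0.
      case: t => k l Hne; rewrite /G phi_gen !mxE /=.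
      have ak : (0 : R) <= (a k)%:R by rewrite ler0n.
      have bl : (0 : R) <= (b l)%:R by rewrite ler0n.
      case: eqP => [Eki|ki]; case: eqP => [Elj|lj].
      - by move: Hne; rewrite Eki Elj eqxx.
      - rewrite Eki; nra.
      - rewrite Elj; nra.
      - nra.
    move=> s Hs; have [lam [L0 L1 ->]] := DS a_pos b_pos Hs.
    rewrite phi_sum (bigD1 (i, j)) //= -/c.
    set rest := \sum_(t | t != (i, j)) _.
    have rle : rest <= 0.
      by apply: sumr_le0 => t Ht; rewrite mulr_ge0_le0 // gle.
    have rge : 0 <= \sum_(t | t != (i, j)) lam t by apply: sumr_ge0.
    have Ls : lam (i, j) + \sum_(t | t != (i, j)) lam t <= 1 by rewrite (bigD1 (i, j)) in L1.
    have lge := L0 (i, j).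
    split; first nra.
    move=> Eq.
    have lam1 : lam (i, j) = 1 by nra.
    have r0 : \sum_(t | t != (i, j)) lam t = 0 by lra.
    have r0' := psumr_eq0P (fun t _ => L0 t) r0.
    rewrite (bigD1 (i, j)) //= lam1 scale1r big1 ?addr0 // => t Ht.
    by rewrite r0' // scale0r.
Qed.
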